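(* Let $P$ be a continuous poset and $(T_\varepsilon)_{\varepsilon\ge0}$ a superlinear family of Scott-continuous translations on $P$ satisfying TR2. Then $d_a(M,\underline M)=0$ and $d_a(M,\overline M)=0$ for every persistence module $M$ over $P$. In particular $d_a(M,0)=0$ whenever $M$ is ephemeral.
   Context: Let $P$ be a poset (as a category, $p\to q$ iff $p\le q$). A subset is directed if nonempty and any two elements have an upper bound in it. $x\ll y$ means: for every directed $D$ whose supremum exists with $y\le\sup D$, some $d\in D$ satisfies $x\le d$. $P$ is continuous if for each $p$ the set $\{x:x\ll p\}$ is directed with supremum $p$. A map $f\colon P\to P$ is Scott-continuous if it is order-preserving and $f(\sup D)=\sup f(D)$ for every directed $D$ whose supremum exists. A translation is an order-preserving $T\colon P\to P$ with $p\le T(p)$ for all $p$. A family $(T_\varepsilon)_{\varepsilon\ge0}$ of translations is superlinear if $T_\varepsilon(T_\delta(p))\le T_{\varepsilon+\delta}(p)$ for all $p$ and $\varepsilon,\delta\ge0$. TR2: $x\ll T_\varepsilon(x)$ for all $x\in P$ and $\varepsilon>0$. $k$ is a commutative ring with unity; persistence modules are functors $M$ from $P$ to $k$-modules. For a translation $T$, $T^*M=M\circ T$, with natural morphism $M\to T^*M$ given by $M(p\le T(p))$. Persistence modules $M,N$ are $\varepsilon$-interleaved if there are morphisms $f\colon M\to T_\varepsilon^*N$, $g\colon N\to T_\varepsilon^*M$ with $T_\varepsilon^*(g)\circ f$ equal to the natural morphism $M\to T_\varepsilon^*T_\varepsilon^*M$ and $T_\varepsilon^*(f)\circ g$ equal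 to the natural morphism $N\to T_\varepsilon^*T_\varepsilon^*N$. $d_a(M,N)$ is the infimum of $\varepsilon\ge0$ for which $M,N$ are $\varepsilon$-interleaved ($\infty$ if none). $\underline M_p=\varprojlim_{x\gg p}M_x$, $\overline M_p=\varinjlim_{x\ll p}M_x$. $M$ is ephemeral if $M(p\le q)=0$ for all $p\ll q$. *)

(* Defs.v *)
From HB Require Import structures.
From mathcomp Require Import all_boot all_order all_algebra.
From mathcomp Require Import classical_sets boolp reals constructive_ereal ereal.
Set Implicit Arguments. Unset Strict Implicit. Unset Printing Implicit Defensive.
Import Order.TTheory GRing.Theory Num.Theory.
Local Open Scope classical_set_scope.
Local Open Scope ring_scope.

Section PosetDefs.
Context {d : Order.disp_t} {P : porderType d}.

Definition directed (D : set P) : Prop :=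
  (exists x, D x) /\
  (forall a b, D a -> D b -> exists c, D c /\ (a <= c)%O /\ (b <= c)%O).

Definition is_sup (D : set P) (s : P) : Prop :=
  (forall x, D x -> (x <= s)%O) /\
  (forall u, (forall x, D x -> (x <= u)%O) -> (s <= u)%O).

Definition waybelow (x y : P) : Prop :=
  forall (D : set P) (s : P), directed D -> is_sup D s -> (y <= s)%O ->
    exists2 z, D z & (x <= z)%O.

Definition continuous_poset : Prop :=
  forall p : P, directed [set x | waybelow x p] /\ is_sup [set x | waybelow x p] p.

Definition order_preserving (f : P -> P) : Prop :=
  forall p q, (p <= q)%O -> (f p <= f q)%O.

Definition scott_continuous (f : P -> P) : Prop :=
  order_preserving f /\
  forall (D : set P) (s : P), directed D -> is_sup D s -> is_sup (f @` D) (f s).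

Definition translation (f : P -> P) : Prop :=
  order_preserving f /\ forall p, (p <= f p)%O.

Definition superlinear {R : realType} (T : R -> P -> P) : Prop :=
  forall e δ : R, 0 <= e -> 0 <= δ -> forall p, (T e (T δ p) <= T (e + δ) p)%O.

Definition TR2 {R : realType} (T : R -> P -> P) : Prop :=
  forall (x : P) (e : R), 0 < e -> waybelow x (T e x).

End PosetDefs.
Arguments continuous_poset {d} P.

Section PMod.
Variable k : comPzRingType.

Definition lin (U V : lmodType k) (f : U -> V) : Prop :=
  forall (a : k) (x y : U), f (a *: x + y) = a *: f x + f y.

Variables (d : Order.disp_t) (P : porderType d).

Record pmod := PMod {
  pobj :> P -> lmodType k;
  pmor : forall p q : P, (p <= q)%O -> pobj p -> pobj q;
  pmor_lin : forall p q (h : (p <= q)%O), lin (pmor h);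
  pmor_id : forall p (h : (p <= p)%O) x, pmor h x = x;
  pmor_comp : forall p q r (h1 : (p <= q)%O) (h2 : (q <= r)%O) (h3 : (p <= r)%O) x,
      pmor h3 x = pmor h2 (pmor h1 x)
}.
Arguments pmor p0 {p q} h _ : rename.

Definition morph_to_pullback (T : P -> P) (M N : pmod)
    (f : forall p, M p -> N (T p)) : Prop :=
  (forall p, lin (f p)) /\
  (forall p q (h : (p <= q)%O) (h' : (T p <= T q)%O) x,
      f q (pmor M h x) = pmor N h' (f p x)).

Arguments morph_to_pullback T M N f : clear implicits.

Definition interleaved (T : P -> P) (M N : pmod) : Prop :=
  exists (f : forall p, M p -> N (T p)) (g : forall p, N p -> M (T p)),
    morph_to_pullback T M N f /\ morph_to_pullback T N M g /\
    (forall p (h : (p <= T (T p))%O) x, g (T p) (f p x) = pmor M h x) /\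
    (forall p (h : (p <= T (T p))%O) x, f (T p) (g p x) = pmor N h x).

Definition d_a {R : realType} (T : R -> P -> P) (M N : pmod) : \bar R :=
  ereal_inf [set e%:E | e in [set e : R | 0 <= e /\ interleaved (T e) M N]].

Definition ephemeral (M : pmod) : Prop :=
  forall p q (h : (p <= q)%O), waybelow p q -> forall x, pmor M h x = 0.

(* (L, pi) realises  L_p = lim_{x >> p} M_x  (with its induced structure maps) *)
Definition is_lower_lim (M L : pmod)
    (pi : forall p x, waybelow p x -> L p -> M x) : Prop :=
  (forall p x hx, lin (pi p x hx)) /\
  (forall p x y hx hy (h : (x <= y)%O) m, pmor M h (pi p x hx m) = pi p y hy m) /\
  (forall p q (h : (p <= q)%O) x hxp hxq m, pi p x hxp m = pi q x hxq (pmor L h m)) /\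
  (forall p (N : lmodType k) (g : forall x, waybelow p x -> N -> M x),
     (forall x hx, lin (g x hx)) ->
     (forall x y hx hy (h : (x <= y)%O) n, pmor M h (g x hx n) = g y hy n) ->
     exists u : N -> L p, lin u /\ (forall x hx n, pi p x hx (u n) = g x hx n) /\
       (forall v : N -> L p, lin v -> (forall x hx n, pi p x hx (v n) = g x hx n) ->
          forall n, v n = u n)).

(* (L, iota) realises  L_p = colim_{x << p} M_x  (with its induced structure maps) *)
Definition is_upper_colim (M L : pmod)
    (iota : forall p x, waybelow x p -> M x -> L p) : Prop :=
  (forall p x hx, lin (iota p x hx)) /\
  (forall p x y hx hy (h : (x <= y)%O) m, iota p y hy (pmor M h m) = iota p x hx m) /\
  (forall p q (h : (p <= q)%O) x hxp hxq m, pmor L h (iota p x hxp m) = iota q x hxq m) /\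
  (forall p (N : lmodType k) (g : forall x, waybelow x p -> M x -> N),
     (forall x hx, lin (g x hx)) ->
     (forall x y hx hy (h : (x <= y)%O) m, g y hy (pmor M h m) = g x hx m) ->
     exists u : L p -> N, lin u /\ (forall x hx m, u (iota p x hx m) = g x hx m) /\
       (forall v : L p -> N, lin v -> (forall x hx m, v (iota p x hx m) = g x hx m) ->
          forall l, v l = u l)).


Definition zero_pmod : pmod.
Proof.
by refine (@PMod (fun _ => 'rV[k]_0) (fun _ _ _ x => x) _ _ _).
Defined.

End PMod.
Arguments is_lower_lim {k d P} M L pi.
Arguments is_upper_colim {k d P} M L iota.
Arguments interleaved {k d P} T M N.
Arguments ephemeral {k d P} M.
Arguments d_a {k d P R} T M N.
Arguments zero_pmod k {d} P.

(* Main.v *)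
Require Import Defs.
From HB Require Import structures.
From mathcomp Require Import all_boot all_order all_algebra.
From mathcomp Require Import classical_sets boolp reals constructive_ereal ereal.
From mathcomp Require Import lra.
Import Order.TTheory GRing.Theory Num.Theory.
Local Open Scope classical_set_scope.
Local Open Scope ring_scope.

Notation pm M h := (@pmor _ _ _ M _ _ h).

Lemma wb_le {d} {P : porderType d} {x y : P} : waybelow x y -> (x <= y)%O.
Proof.
move=> H.
have Dd : directed [set y].
  split; first by exists y.
  by move=> a b -> ->; exists y; rewrite lexx.
have Ds : is_sup [set y] y.
  split; first by move=> ? ->.
  by move=> u; apply.
have [z Dz xz] := H [set y] y Dd Ds (lexx y).
by move: Dz => /= <-.
Qed.

Lemma wb_l {d} {P : porderType d} {a b c : P} : (a <= b)%O -> waybelow b c -> waybelow a c.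
Proof.
move=> ab H D s Dd Ds cs; have [z Dz bz] := H D s Dd Ds cs.
by exists z => //; exact: le_trans bz.
Qed.

Lemma wb_r {d} {P : porderType d} {a b c : P} : waybelow a b -> (b <= c)%O -> waybelow a c.
Proof. by move=> H bc D s Dd Ds cs; exact: H D s Dd Ds (le_trans bc cs). Qed.

Lemma lin_comp {k : comPzRingType} {U V W : lmodType k} {f : V -> W} {g : U -> V} :
  lin f -> lin g -> lin (fun x => f (g x)).
Proof. by move=> lf lg a x y; rewrite lg lf. Qed.

Lemma lin0 {k : comPzRingType} {U V : lmodType k} {f : U -> V} : lin f -> f 0 = 0.
Proof.
move=> lf; have E := lf 1 0 0; rewrite !scale1r addr0 in E.
by apply: (addrI (f 0)); rewrite addr0 -E.
Qed.

Lemma pmor_irr {k : comPzRingType} {d} {P : porderType d} {M : pmod k P} {p q : P}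
  (h h' : (p <= q)%O) x : pm M h x = pm M h' x.
Proof. by rewrite (bool_irrelevance h h'). Qed.

Lemma pmorC {k : comPzRingType} {d} {P : porderType d} {M : pmod k P} {p q r : P}
  (h1 : (p <= q)%O) (h2 : (q <= r)%O) (h3 : (p <= r)%O) x :
  pm M h2 (pm M h1 x) = pm M h3 x.
Proof. by rewrite (pmor_comp h1 h2 h3). Qed.

Lemma lower_sep {k d} {P : porderType d} {M L : pmod k P} {pr : forall p x, waybelow p x -> L p -> M x} (H : is_lower_lim M L pr)
  {p} {N : lmodType k} (v1 v2 : N -> L p) :
  lin v1 -> lin v2 -> (forall x hx n, pr p x hx (v1 n) = pr p x hx (v2 n)) ->
  forall n, v1 n = v2 n.
Proof.
move=> l1 l2 E; case: H => [Hl [H2 [H3 Hu]]].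
have lg : forall x hx, lin (fun n => pr p x hx (v1 n)).
  by move=> x hx; apply: lin_comp.
have cg : forall x y hx hy (h : (x <= y)%O) n,
    pm M h (pr p x hx (v1 n)) = pr p y hy (v1 n).
  by move=> *; apply: H2.
have [u [lu [pu uu]]] := Hu p N (fun x hx n => pr p x hx (v1 n)) lg cg.
move=> n; rewrite (uu v1 l1 (fun _ _ _ => erefl) n) (uu v2 l2 _ n) //.
Qed.

Lemma upper_sep {k d} {P : porderType d} {M L : pmod k P} {iota : forall p x, waybelow x p -> M x -> L p} (H : is_upper_colim M L iota)
  {p} {N : lmodType k} (v1 v2 : L p -> N) :
  lin v1 -> lin v2 -> (forall x hx m, v1 (iota p x hx m) = v2 (iota p x hx m)) ->
  forall l, v1 l = v2 l.
Proof.
move=> l1 l2 E; case: H => [Hl [H2 [H3 Hu]]].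
have lg : forall x hx, lin (fun m => v1 (iota p x hx m)).
  by move=> x hx; apply: lin_comp.
have cg : forall x y hx hy (h : (x <= y)%O) m,
    v1 (iota p y hy (pm M h m)) = v1 (iota p x hx m).
  by move=> *; rewrite H2.
have [u [lu [pu uu]]] := Hu p N (fun x hx m => v1 (iota p x hx m)) lg cg.
move=> l; rewrite (uu v1 l1 (fun _ _ _ => erefl) l) (uu v2 l2 _ l) //.
Qed.

Lemma lower_inter k d (P : porderType d) (Te : P -> P)
  (Ti : forall p, (p <= Te p)%O) (Tw : forall p, waybelow p (Te p))
  (M L : pmod k P) pi : is_lower_lim M L pi -> interleaved Te M L.
Proof.
move=> H; have H' := H; case: H' => [Hl [H2 [H3 Hu]]].
have fex : forall p, {u : M p -> L (Te p) | lin u /\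
    forall x hx m (h : (p <= x)%O), pi (Te p) x hx (u m) = pm M h m}.
  move=> p; apply: cid.
  pose g x (hx : waybelow (Te p) x) m := pm M (le_trans (Ti p) (wb_le hx)) m.
  have lg : forall x hx, lin (g x hx) by move=> x hx; apply: pmor_lin.
  have cg : forall x y hx hy (h : (x <= y)%O) m, pm M h (g x hx m) = g y hy m.
    by move=> x y hx hy h m; rewrite /g; apply: pmorC.
  have [u [lu [pu _]]] := Hu (Te p) (M p) g lg cg.
  exists u; split=> // x hx m h; rewrite pu; exact: pmor_irr.
pose f p := sval (fex p).
have fl : forall p, lin (f p) by move=> p; exact: (proj1 (svalP (fex p))).
have fs : forall p x hx m (h : (p <= x)%O), pi (Te p) x hx (f p m) = pm M h m.
  by move=> p; exact: (proj2 (svalP (fex p))).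
exists f, (fun p => pi p (Te p) (Tw p)).
split; [|split; [|split]].
- split=> // p q h h' m.
  have hx : forall x, waybelow (Te q) x -> (p <= x)%O.
    by move=> x hx; apply: le_trans h (le_trans (Ti q) (wb_le hx)).
  apply: (lower_sep H (fun m => f q (pm M h m)) (fun m => pm L h' (f p m))).
  + by apply: lin_comp => //; apply: pmor_lin.
  + by apply: lin_comp => //; apply: pmor_lin.
  move=> x hqx n.
  have hqx' : (q <= x)%O by apply: le_trans (Ti q) (wb_le hqx).
  rewrite (fs q x hqx _ hqx') -(H3 _ _ h' x (wb_l h' hqx) hqx) (fs p x _ _ (hx x hqx)).
  exact: pmorC.
- split; first by move=> p; apply: Hl.
  move=> p q h h' l /=.
  rewrite -(H3 p q h (Te q) (wb_l h (Tw q)) (Tw q) l).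
  by rewrite (H2 p (Te p) (Te q) (Tw p) (wb_l h (Tw q)) h' l).
- by move=> p h m; rewrite fs.
- move=> p h l.
  apply: (lower_sep H (fun l => f (Te p) (pi p (Te p) (Tw p) l)) (fun l => pm L h l)).
  + by apply: lin_comp => //; apply: Hl.
  + exact: pmor_lin.
  move=> x hx n.
  have hTpx : (Te p <= x)%O by apply: le_trans (Ti (Te p)) (wb_le hx).
  rewrite (fs (Te p) x hx _ hTpx) (H2 p (Te p) x (Tw p) (wb_r (Tw p) hTpx) hTpx n).
  by rewrite -(H3 p _ h x (wb_r (Tw p) hTpx) hx n).
Qed.

Lemma upper_inter k d (P : porderType d) (Te : P -> P)
  (Ti : forall p, (p <= Te p)%O) (Tw : forall p, waybelow p (Te p))
  (M L : pmod k P) io : is_upper_colim M L io -> interleaved Te M L.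
Proof.
move=> H; have H' := H; case: H' => [Hl [H2 [H3 Hu]]].
have gex : forall p, {u : L p -> M (Te p) | lin u /\
    forall x hx m (h : (x <= Te p)%O), u (io p x hx m) = pm M h m}.
  move=> p; apply: cid.
  pose g x (hx : waybelow x p) m := pm M (le_trans (wb_le hx) (Ti p)) m.
  have lg : forall x hx, lin (g x hx) by move=> x hx; apply: pmor_lin.
  have cg : forall x y hx hy (h : (x <= y)%O) m, g y hy (pm M h m) = g x hx m.
    by move=> x y hx hy h m; rewrite /g; apply: pmorC.
  have [u [lu [pu _]]] := Hu p (M (Te p)) g lg cg.
  exists u; split=> // x hx m h; rewrite pu; exact: pmor_irr.
pose g p := sval (gex p).
have gl : forall p, lin (g p) by move=> p; exact: (proj1 (svalP (gex p))).
have gs : forall p x hx m (h : (x <= Te p)%O), g p (io p x hx m) = pm M h m.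
  by move=> p; exact: (proj2 (svalP (gex p))).
exists (fun p => io (Te p) p (Tw p)), g.
split; [|split; [|split]].
- split; first by move=> p; apply: Hl.
  move=> p q h h' m /=.
  rewrite (H2 (Te q) p q (wb_l h (Tw q)) (Tw q) h m).
  by rewrite (H3 (Te p) (Te q) h' p (Tw p) (wb_l h (Tw q)) m).
- split=> // p q h h' l.
  apply: (upper_sep H (fun l => g q (pm L h l)) (fun l => pm M h' (g p l))).
  + by apply: lin_comp => //; apply: pmor_lin.
  + by apply: lin_comp => //; apply: pmor_lin.
  move=> x hx m.
  have hxq : (x <= Te q)%O by apply: le_trans (wb_le hx) (le_trans h (Ti q)).
  have hxp : (x <= Te p)%O by apply: le_trans (wb_le hx) (Ti p).
  rewrite (H3 p q h x hx (wb_r hx h) m) (gs q x _ m hxq) (gs p x hx m hxp).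
  by rewrite pmorC.
- by move=> p h m /=; rewrite gs.
- move=> p h l.
  apply: (upper_sep H (fun l => io (Te (Te p)) (Te p) (Tw (Te p)) (g p l)) (fun l => pm L h l)).
  + by apply: lin_comp => //; apply: Hl.
  + exact: pmor_lin.
  move=> x hx m.
  have hxTp : (x <= Te p)%O by apply: le_trans (wb_le hx) (Ti p).
  rewrite (gs p x hx m hxTp) (H2 _ x (Te p) (wb_l hxTp (Tw (Te p))) (Tw (Te p)) hxTp m).
  by rewrite (H3 p _ h x hx (wb_l hxTp (Tw (Te p))) m).
Qed.

Lemma eph_inter k d (P : porderType d) (Te : P -> P)
  (Ti : forall p, (p <= Te p)%O) (Tw : forall p, waybelow p (Te p))
  (M : pmod k P) : ephemeral M -> interleaved Te M (zero_pmod k P).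
Proof.
move=> HM.
have l0 : forall (U V : lmodType k), lin (fun _ : U => (0 : V)).
  by move=> U V a x y; rewrite scaler0 addr0.
exists (fun p _ => 0), (fun p _ => 0).
split; [|split; [|split]].
- by split=> // *; apply: l0.
- split=> [p|p q h h' x]; first by apply: l0.
  by rewrite (lin0 (pmor_lin _)).
- move=> p h x; rewrite HM //.
  exact: wb_r (Tw p) (Ti (Te p)).
- by move=> p h x /=; apply/rowP => -[].
Qed.

Lemma da0 (R : realType) k d (P : porderType d) (T : R -> P -> P) (M N : pmod k P) :
  (forall e : R, 0 < e -> interleaved (T e) M N) -> d_a T M N = 0%E.
Proof.
move=> H; rewrite /d_a.
set i := ereal_inf _.
have Hi : forall e : R, 0 < e -> (i <= e%:E)%E.
  move=> e e0; apply: ge_ereal_inf; exists e%:E => //; exists e => //; split; [exact: ltW | exact: H].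
have Hg : (0 <= i)%E.
  by apply: le_ereal_inf_tmp => _ [e [e0 _] <-]; rewrite lee_fin.
move: Hi Hg; case: i => [r| |] Hi Hg //.
- congr (_%:E); apply/eqP; rewrite eq_le; rewrite lee_fin in Hg; rewrite Hg andbT.
  case: (lerP r 0) => // r0.
  have := Hi (r / 2) _; rewrite lee_fin => /(_ _); lra.
- by have := Hi 1 ltr01.
Qed.

Theorem mainTheorem18 (R : realType) (d : Order.disp_t) (P : porderType d)
    (T : R -> P -> P) (k : comPzRingType) :
  continuous_poset P ->
  (forall e : R, 0 <= e -> translation (T e) /\ scott_continuous (T e)) ->
  superlinear T -> TR2 T ->
  (forall (M L : pmod k P) (pi : forall p x, waybelow p x -> L p -> M x),
      is_lower_lim M L pi -> d_a T M L = 0%E) /\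
  (forall (M L : pmod k P) (iota : forall p x, waybelow x p -> M x -> L p),
      is_upper_colim M L iota -> d_a T M L = 0%E) /\
  (forall M : pmod k P, ephemeral M -> d_a T M (zero_pmod k P) = 0%E).
Proof.
move=> _ HT _ Htr.
have Ti : forall e : R, 0 < e -> forall p, (p <= T e p)%O.
  by move=> e e0; case: (HT e (ltW e0)) => -[_ H] _.
have Tw : forall e : R, 0 < e -> forall p, waybelow p (T e p).
  by move=> e e0 p; apply: Htr.
split; [|split].
- move=> M L pi H; apply: da0 => e e0; exact: lower_inter (Ti e e0) (Tw e e0) _ _ _ H.
- move=> M L io H; apply: da0 => e e0; exact: upper_inter (Ti e e0) (Tw e e0) _ _ _ H.
- move=> M H; apply: da0 => e e0; exact: eph_inter (Ti e e0) (Tw e e0) _ H.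
Qed.
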